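(* Let $m$ be a positive integer, let $\lambda$ be the real root of $x^3-mx^2-1$, and let $K=\mathbb{Q}(\lambda)$. Then $\left(\frac{1}{1+\lambda+\lambda^2},\frac{\lambda}{1+\lambda+\lambda^2}\right)$ is a periodic point of $T_{K,5/2}$, i.e. it lies in $\Delta_K$ and there exist positive integers $m_1\neq n_1$ with $T_{K,5/2}^{m_1}\left(\frac{1}{1+\lambda+\lambda^2},\frac{\lambda}{1+\lambda+\lambda^2}\right)=T_{K,5/2}^{n_1}\left(\frac{1}{1+\lambda+\lambda^2},\frac{\lambda}{1+\lambda+\lambda^2}\right)$.
   Context: Let $K\subset\mathbb{R}$ be a real cubic number field, $N=N_{K/\mathbb{Q}}$ its norm, and $r=5/2$. Let $\Delta_K=\{(\alpha,\beta)\in K^2:\ 1,\alpha,\beta \text{ linearly independent over }\mathbb{Q},\ \alpha,\beta>0,\ \alpha+\beta<1\}$ and $Ind=\{(i,j): i,j\in\{0,1,2\},\ i\neq j\}$. Let $\Delta=\{(x,y)\in\mathbb{R}^2: x,y\ge 0,\ x+y\le 1\}$ and $\triangle(1,2)=\{(x,y)\in\Delta: x\ge y\}$, $\triangle(2,1)=\{x\le y\}$, $\triangle(0,1)=\{2x+y-1\le 0\}$, $\triangle(1,0)=\{2x+y-1\ge 0\}$, $\triangle(0,2)=\{x+2y-1\le0\}$, $\triangle(2,0)=\{x+2y-1\ge 0\}$ (all subsets of $\Delta$). Maps $T_{(i,j)}:\triangle(i,j)\to\Delta$: $T_{(1,2)}(x,y)=(\frac{x-y}{1-y},\frac{y}{1-y})$,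 $T_{(2,1)}(x,y)=(\frac{x}{1-x},\frac{y-x}{1-x})$, $T_{(0,1)}(x,y)=(\frac{x}{1-x},\frac{y}{1-x})$, $T_{(1,0)}(x,y)=(\frac{2x+y-1}{x+y},\frac{y}{x+y})$, $T_{(0,2)}(x,y)=(\frac{x}{1-y},\frac{y}{1-y})$, $T_{(2,0)}(x,y)=(\frac{x}{x+y},\frac{x+2y-1}{x+y})$. For $(\alpha,\beta)\in\Delta_K$ put $\gamma=1-\alpha-\beta$ and $v_{\{1,2\}}=\frac{\alpha^r\beta^r}{|N(\alpha)N(\beta)|}$, $v_{\{0,1\}}=\frac{\alpha^r\gamma^r}{|N(\alpha)N(\gamma)|}$, $v_{\{0,2\}}=\frac{\beta^r\gamma^r}{|N(\beta)N(\gamma)|}$; the maximum is attained at a unique pair $\{i_0,j_0\}$. $\varepsilon(\alpha,\beta)$ is the ordered pair $(i,j)\in Ind$ with $\{i,j\}=\{i_0,j_0\}$ and $(\alpha,\beta)\in\triangle(i,j)$, and $T_{K,5/2}(\alpha,\beta)=T_{\varepsilon(\alpha,\beta)}(\alpha,\beta)$ (a map $\Delta_K\to\Delta_K$). *)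

(* Defs.v *)
From HB Require Import structures.
From mathcomp Require Import all_boot all_order all_algebra.
From mathcomp Require Import boolp classical_sets reals exp.
Set Implicit Arguments. Unset Strict Implicit. Unset Printing Implicit Defensive.
Import Order.TTheory GRing.Theory Num.Theory.
Local Open Scope ring_scope.

Section Defs.
Variable R : realType.
Implicit Types (lam x y : R) (p : R * R).

(* K = Q(lam) viewed inside R : the Q-span of 1, lam, lam^2
   (lam has degree 3 in the application). *)
Definition inK lam x : Prop :=
  exists a b c : rat, x = ratr a + ratr b * lam + ratr c * lam ^+ 2.

(* Field norm N_{K/Q}(x) = det of the matrix (over Q) of the Q-linear map
   "multiplication by x" in the basis (1, lam, lam^2):
   x * lam^j = \sum_i M i j * lam^i. *)
Definition mulmat lam x : 'M[rat]_3 :=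
  xget 0 [set M : 'M[rat]_3 | forall j : 'I_3,
             x * lam ^+ j = \sum_(i < 3) ratr (M i j) * lam ^+ i].
Definition normK lam x : R := ratr (\det (mulmat lam x)).

Definition Qindep3 (a b : R) : Prop :=
  forall u v w : rat, ratr u + ratr v * a + ratr w * b = 0 -> [/\ u = 0, v = 0 & w = 0].

Definition inDeltaK lam p : Prop :=
  [/\ inK lam p.1, inK lam p.2, Qindep3 p.1 p.2 &
     [/\ 0 < p.1, 0 < p.2 & p.1 + p.2 < 1]].

Definition inInd (ij : nat * nat) : Prop := [/\ (ij.1 < 3)%N, (ij.2 < 3)%N & ij.1 <> ij.2].

Definition inDelta p : Prop := [/\ 0 <= p.1, 0 <= p.2 & p.1 + p.2 <= 1].
Definition tri (ij : nat * nat) p : Prop :=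
  let x := p.1 in let y := p.2 in
  inDelta p /\
  match ij with
  | (1, 2)%N => y <= x
  | (2, 1)%N => x <= y
  | (0, 1)%N => 2 * x + y - 1 <= 0
  | (1, 0)%N => 2 * x + y - 1 >= 0
  | (0, 2)%N => x + 2 * y - 1 <= 0
  | (2, 0)%N => x + 2 * y - 1 >= 0
  | _ => False
  end.

Definition Tij (ij : nat * nat) p : R * R :=
  let x := p.1 in let y := p.2 in
  match ij with
  | (1, 2)%N => ((x - y) / (1 - y), y / (1 - y))
  | (2, 1)%N => (x / (1 - x), (y - x) / (1 - x))
  | (0, 1)%N => (x / (1 - x), y / (1 - x))
  | (1, 0)%N => ((2 * x + y - 1) / (x + y), y / (x + y))
  | (0, 2)%N => (x / (1 - y), y / (1 - y))
  | (2, 0)%N => (x / (x + y), (x + 2 * y - 1) / (x + y))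
  | _ => p
  end.

(* coordinates: index 0 -> gamma = 1 - alpha - beta, 1 -> alpha, 2 -> beta *)
Definition coordK (k : nat) p : R :=
  match k with 0%N => 1 - p.1 - p.2 | 1%N => p.1 | _ => p.2 end.

Definition rr : R := 5%:R / 2%:R.

Definition vK lam (i j : nat) p : R :=
  powR (coordK i p) rr * powR (coordK j p) rr
  / `| normK lam (coordK i p) * normK lam (coordK j p) |.

Definition is_eps lam p (ij : nat * nat) : Prop :=
  [/\ inInd ij,
      (forall kl : nat * nat, inInd kl ->
         ~ (kl.1 = ij.1 /\ kl.2 = ij.2) -> ~ (kl.1 = ij.2 /\ kl.2 = ij.1) ->
         vK lam kl.1 kl.2 p < vK lam ij.1 ij.2 p)
    & tri ij p].

Definition TK lam p : option (R * R) :=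
  if `[< inDeltaK lam p /\ exists! ij, is_eps lam p ij >]
  then Some (Tij (xget (0%N, 0%N) (is_eps lam p)) p)
  else None.

Fixpoint TKiter lam (n : nat) p : option (R * R) :=
  match n with
  | 0%N => Some p
  | n'.+1 => obind (TK lam) (TKiter lam n' p)
  end.

End Defs.

(* Main.v *)
Require Import Defs.
From HB Require Import structures.
From mathcomp Require Import all_boot all_order all_algebra.
From mathcomp Require Import boolp classical_sets reals exp.
From mathcomp Require Import ring lra zify.
Import Order.TTheory GRing.Theory Num.Theory.
Local Open Scope ring_scope.
Set Implicit Arguments. Unset Strict Implicit. Unset Printing Implicit Defensive.

Lemma int_noroot (m : nat) (n : int) : (0 < m)%N -> n ^+ 3 - m%:Z * n ^+ 2 - 1 != 0.
Proof.
move=> hm; apply/eqP => h.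
have h2 : n ^+ 2 * (n - m%:Z) = 1 by apply/eqP; rewrite -subr_eq0 -h; apply/eqP; ring.
have : (0 < n - m%:Z).
  rewrite ltNge; apply/negP => hle.
  have : n ^+ 2 * (n - m%:Z) <= 0.
    by rewrite mulr_ge0_le0 // sqr_ge0.
  by rewrite h2.
move=> hp.
have hn : 2 <= n by lia.
have : 4 <= n ^+ 2 by nia.
nia.
Qed.

Lemma rat_noroot (m : nat) (r : rat) : (0 < m)%N -> r ^+ 3 - m%:R * r ^+ 2 - 1 != 0.
Proof.
move=> hm; apply/eqP => h.
set n := numq r; set d := denq r.
have hd : 0 < d by apply: denq_gt0.
have hr : r = n%:~R / d%:~R by rewrite divq_num_den.
have hdq : (d%:~R : rat) != 0 by rewrite intr_eq0 gt_eqF.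
have e : (n ^+ 3 - m%:Z * n ^+ 2 * d - d ^+ 3 = 0).
  apply/eqP; rewrite -(intr_eq0 rat) ; apply/eqP.
  have : (r ^+ 3 - m%:R * r ^+ 2 - 1) * (d%:~R) ^+ 3 = 0 by rewrite h mul0r.
  rewrite hr => <-.
  rewrite ?rmorphB ?rmorphM ?rmorphXn /=.
  rewrite -pmulrn.
  field.
  by [].
have ed : n ^+ 3 = d * (m%:Z * n ^+ 2 + d ^+ 2).
  by apply/eqP; rewrite -subr_eq0 -e; apply/eqP; ring.
have dv : (absz d %| (absz n) ^ 3)%N.
  by rewrite -abszX ed abszM dvdn_mulr.
have cop : coprime ((absz n) ^ 3) (absz d).
  by rewrite coprime_sym coprimeXr // coprime_sym coprime_num_den.
have := coprime_dvdl dv cop.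
rewrite /coprime gcdnn => /eqP d1.
have d1' : d = 1.
  by move: hd d1; rewrite /d; case: (denq r) => // dn _ /= ->.
have := @int_noroot m n hm.
rewrite -e d1' !expr1n !mulr1; by rewrite eqxx.
Qed.

Section Main.
Variable R : realType.
Variable m : nat.
Variable lam : R.
Hypothesis hm : (0 < m)%N.
Hypothesis hlam : lam ^+ 3 - m%:R * lam ^+ 2 - 1 = 0.

Lemma lam_gt_m : m%:R < lam.
Proof.
have h2 : lam ^+ 2 * (lam - m%:R) = 1.
  by apply/eqP; rewrite -subr_eq0 -hlam; apply/eqP; ring.
rewrite ltNge; apply/negP => hle.
have : lam ^+ 2 * (lam - m%:R) <= 0 by rewrite mulr_ge0_le0 ?sqr_ge0 // subr_le0.
by rewrite h2 ler10.
Qed.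

Lemma lam_gt1 : 1 < lam.
Proof. apply: le_lt_trans lam_gt_m; by rewrite ler1n. Qed.

Lemma lam_gt0 : 0 < lam.
Proof. exact: lt_trans lam_gt1. Qed.

Lemma ratr_notroot (r : rat) : ratr r <> lam.
Proof.
move=> e; have := @rat_noroot m r hm; apply/negP; rewrite negbK.
rewrite -(fmorph_eq0 (@ratr R)) !rmorphB !rmorphM ?rmorphXn rmorph_nat rmorph1.
by apply/eqP; rewrite -hlam -e; ring.
Qed.

Lemma Qind (u v w : rat) :
  ratr u + ratr v * lam + ratr w * lam ^+ 2 = 0 -> [/\ u = 0, v = 0 & w = 0].
Proof.
move=> h.
have lin : forall a b : rat, ratr a + ratr b * lam = 0 -> a = 0 /\ b = 0.
  move=> a b hab.
  have hb : b = 0.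
    apply/eqP; apply/negP => bnz.
    apply: (@ratr_notroot (- a / b)).
    have -> : ratr (- a / b) = - ratr a / ratr b :> R.
      by rewrite rmorphM rmorphN fmorphV.
    have hb' : ratr b != 0 :> R.
      by rewrite fmorph_eq0; apply/negP.
    have -> : ratr a = - (ratr b * lam) :> R.
      by apply/eqP; rewrite -subr_eq0 opprK hab.
    by field.
  split => //; move: hab; rewrite hb rmorph0 mul0r addr0 => /eqP.
  by rewrite fmorph_eq0 => /eqP.
have [w0|wnz] := eqVneq w 0.
  move: h; rewrite w0 rmorph0 mul0r addr0 => /lin [-> ->]; by [].
exfalso.
set p := - v / w; set q := - u / w.
have hw' : ratr w != 0 :> R by rewrite fmorph_eq0.
have l2 : lam ^+ 2 = ratr p * lam + ratr q.
  have -> : ratr p = - ratr v / ratr w :> R.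
    by rewrite /p rmorphM rmorphN fmorphV.
  have -> : ratr q = - ratr u / ratr w :> R.
    by rewrite /q rmorphM rmorphN fmorphV.
  apply/eqP; rewrite -subr_eq0; apply/eqP.
  have -> : lam ^+ 2 - (- ratr v / ratr w * lam + - ratr u / ratr w) =
    (ratr u + ratr v * lam + ratr w * lam ^+ 2) / ratr w by field.
  by rewrite h mul0r.
have l3 : (ratr (p ^+ 2 + q - m%:R * p) : R) * lam + ratr (p * q - m%:R * q - 1) = 0.
  have -> : ratr (p ^+ 2 + q - m%:R * p) = ratr p ^+ 2 + ratr q - m%:R * ratr p :> R.
    by rewrite !rmorphB !rmorphD !rmorphM ?rmorphXn rmorph_nat.
  have -> : ratr (p * q - m%:R * q - 1) = ratr p * ratr q - m%:R * ratr q - 1 :> R.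
    by rewrite !rmorphB !rmorphM rmorph_nat rmorph1.
  have D0 : lam ^+ 2 - ratr p * lam - ratr q = 0 by rewrite l2; ring.
  rewrite -hlam; apply/eqP; rewrite -subr_eq0; apply/eqP.
  have -> : (ratr p ^+ 2 + ratr q - m%:R * ratr p) * lam + (ratr p * ratr q - m%:R * ratr q - 1)
     - (lam ^+ 3 - m%:R * lam ^+ 2 - 1) = - (lam + ratr p - m%:R) * (lam ^+ 2 - ratr p * lam - ratr q) by ring.
  by rewrite D0 mulr0.
move: l3; rewrite addrC => /lin [h1 h2].
have hq : q = m%:R * p - p ^+ 2.
  by apply/eqP; rewrite -subr_eq0; apply/eqP; rewrite -h2; ring.
have := @rat_noroot m (m%:R - p) hm; apply/negP; rewrite negbK; apply/eqP.
rewrite -h1 hq; ring.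
Qed.


Lemma sum3 (V : nmodType) (F : 'I_3 -> V) : \sum_(i < 3) F i = F 0 + F 1 + F 2.
Proof.
rewrite !big_ord_recl big_ord0 addr0 addrA.
by congr (F _ + F _ + F _); apply/val_inj.
Qed.

Lemma ord3P (j : 'I_3) : [\/ j = 0, j = 1 | j = 2].
Proof.
case: j => [[|[|[|k]]]] hj.
- by constructor 1; apply/val_inj.
- by constructor 2; apply/val_inj.
- by constructor 3; apply/val_inj.
- by [].
Qed.

Definition mspec (x : R) (M : 'M[rat]_3) :=
  forall j : 'I_3, x * lam ^+ j = \sum_(i < 3) ratr (M i j) * lam ^+ i.

Definition kval (a b c : rat) : R := ratr a + ratr b * lam + ratr c * lam ^+ 2.

Definition Mof (a b c : rat) : 'M[rat]_3 := \matrix_(i < 3, j < 3)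
  match nat_of_ord i, nat_of_ord j with
  | 0, 0 => a | 0, 1 => c | 0, _ => b + c * m%:R
  | 1, 0 => b | 1, 1 => a | 1, _ => c
  | _, 0 => c | _, 1 => b + c * m%:R | _, _ => a + m%:R * (b + c * m%:R) end.

Lemma Mof_spec a b c : mspec (kval a b c) (Mof a b c).
Proof.
move=> j; case: (ord3P j) => ->; rewrite sum3 !mxE /= /kval;
  rewrite ?rmorphD ?rmorphM ?rmorph_nat /= ?expr0 ?expr1;
  apply/eqP; rewrite -subr_eq0; apply/eqP.
- ring.
- transitivity (ratr c * (lam ^+ 3 - m%:R * lam ^+ 2 - 1)); first ring.
  by rewrite hlam mulr0.
- transitivity ((ratr b + ratr c * lam + ratr c * m%:R) * (lam ^+ 3 - m%:R * lam ^+ 2 - 1)); first ring.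
  by rewrite hlam mulr0.
Qed.

Lemma mspec_uniq x M M' : mspec x M -> mspec x M' -> M = M'.
Proof.
move=> h h'; apply/matrixP => i j.
have e := h j; rewrite h' !sum3 in e.
have e2 : ratr (M' 0 j - M 0 j) + ratr (M' 1 j - M 1 j) * lam
   + ratr (M' 2 j - M 2 j) * lam ^+ 2 = 0 :> R.
  rewrite !rmorphB /=; move: e; rewrite expr0 expr1 => e.
  apply/eqP; rewrite -subr_eq0 -[X in _ - X](subr0) -[X in _ - (_ - X)](subrr (ratr (M' 0 j) * 1 + ratr (M' 1 j) * lam + ratr (M' 2 j) * lam ^+ 2)).
  rewrite [X in _ - (_ - (X - _))]e; apply/eqP; ring.
have [h0 h1 h2] := Qind e2.
by case: (ord3P i) => ->; apply/eqP; rewrite eq_sym -subr_eq0 ?h0 ?h1 ?h2.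
Qed.

Lemma mulmat_eq x M : mspec x M -> mulmat lam x = M.
Proof.
move=> h; rewrite /mulmat; apply: xget_unique => //.
by move=> M' hM'; apply: (mspec_uniq hM' h).
Qed.

Lemma inK_kval x : inK lam x -> exists a b c, x = kval a b c.
Proof. by []. Qed.

Lemma inK_spec x : inK lam x -> mspec x (mulmat lam x).
Proof.
case=> a [b [c ->]]; rewrite (mulmat_eq (Mof_spec a b c)); exact: Mof_spec.
Qed.

Lemma mul_comb x M (f : 'I_3 -> rat) : mspec x M ->
  x * \sum_(j < 3) ratr (f j) * lam ^+ j =
  \sum_(i < 3) ratr (\sum_(j < 3) M i j * f j) * lam ^+ i.
Proof.
move=> h; rewrite mulr_sumr.
transitivity (\sum_(j < 3) ratr (f j) * (x * lam ^+ j)).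
  by apply: eq_bigr => j _; rewrite mulrCA.
under eq_bigr => j _ do rewrite h mulr_sumr.
rewrite exchange_big /=; apply: eq_bigr => i _.
rewrite rmorph_sum mulr_suml; apply: eq_bigr => j _.
rewrite rmorphM /=; ring.
Qed.

Lemma inK_comb (f : 'I_3 -> rat) : inK lam (\sum_(i < 3) ratr (f i) * lam ^+ i).
Proof. by exists (f 0), (f 1), (f 2); rewrite sum3 expr0 expr1 mulr1. Qed.

Lemma inK_comb' x : inK lam x -> exists f : 'I_3 -> rat, x = \sum_(i < 3) ratr (f i) * lam ^+ i.
Proof.
case=> a [b [c ->]]; exists (fun i : 'I_3 => if i == 0 then a else if i == 1 then b else c).
by rewrite sum3 /= expr0 expr1 mulr1.
Qed.

Lemma inK_mul x y : inK lam x -> inK lam y -> inK lam (x * y).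
Proof.
move=> hx hy; have [f ->] := inK_comb' hy.
rewrite (mul_comb _ (inK_spec hx)); exact: inK_comb.
Qed.

Lemma inK_add x y : inK lam x -> inK lam y -> inK lam (x + y).
Proof.
case=> a [b [c ->]] [a' [b' [c' ->]]]; exists (a + a'), (b + b'), (c + c').
rewrite !rmorphD /=; ring.
Qed.

Lemma inK_rat q : inK lam (ratr q).
Proof. by exists q, 0, 0; rewrite !rmorph0 !mul0r !addr0. Qed.

Lemma inK_lam : inK lam lam.
Proof. by exists 0, 1, 0; rewrite !rmorph0 rmorph1 !mul0r mul1r add0r addr0. Qed.

Lemma mulmat_mul x y : inK lam x -> inK lam y ->
  mulmat lam (x * y) = mulmat lam x *m mulmat lam y.
Proof.
move=> hx hy; apply: mulmat_eq => j.
rewrite -mulrA (inK_spec hy j).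
rewrite (mul_comb (fun i => mulmat lam y i j) (inK_spec hx)).
by apply: eq_bigr => i _; rewrite mxE.
Qed.

Lemma normK_mul x y : inK lam x -> inK lam y ->
  normK lam (x * y) = normK lam x * normK lam y.
Proof. by move=> hx hy; rewrite /normK mulmat_mul // det_mulmx rmorphM. Qed.

Lemma normK_neq0 x : inK lam x -> x != 0 -> normK lam x != 0.
Proof.
move=> hx xnz; rewrite /normK fmorph_eq0; apply/negP => /eqP d0.
have : \det (mulmat lam x)^T == 0 by rewrite det_tr d0.
case/det0P => v vnz vM.
set f := fun j : 'I_3 => v 0 j.
have e := mul_comb f (inK_spec hx).
have z : forall i : 'I_3, \sum_(j < 3) mulmat lam x i j * f j = 0.
  move=> i; transitivity ((v *m (mulmat lam x)^T) 0 i); last by rewrite vM mxE.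
  by rewrite mxE; apply: eq_bigr => j _; rewrite mxE mulrC.
have e' : x * \sum_(j < 3) ratr (f j) * lam ^+ j = 0.
  by rewrite e; apply: big1 => i _; rewrite z rmorph0 mul0r.
move/eqP: e'; rewrite mulf_eq0 (negbTE xnz) /= sum3 expr0 expr1 mulr1 => /eqP e2.
have [h0 h1 h2] := Qind e2.
move/negP: vnz; apply; apply/eqP/rowP => j; rewrite mxE.
by case: (ord3P j) => ->; rewrite -[v 0 _]/(f _) ?h0 ?h1 ?h2.
Qed.

Lemma inK_inv x : inK lam x -> x != 0 -> inK lam x^-1.
Proof.
move=> hx xnz.
set M := mulmat lam x.
have Mu : M \in unitmx.
  rewrite unitmxE unitfE; have := normK_neq0 hx xnz; by rewrite /normK fmorph_eq0.
set e : 'cV[rat]_3 := \col_i (if i == 0 then 1 else 0).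
set u := invmx M *m e.
have Mue : M *m u = e by rewrite /u mulmxA mulmxV // mul1mx.
have hc := mul_comb (fun j => u j 0) (inK_spec hx).
have ee : forall i, \sum_(j < 3) M i j * u j 0 = e i 0 by move=> i; rewrite -Mue mxE.
have h : x * \sum_(j < 3) ratr (u j 0) * lam ^+ j = 1.
  rewrite hc sum3 !ee !mxE /= rmorph1 rmorph0 !mul0r !addr0 expr0 mulr1 //.
have -> : x^-1 = \sum_(j < 3) ratr (u j 0) * lam ^+ j.
  by rewrite -[LHS]mulr1 -h mulKf.
exact: inK_comb.
Qed.



Lemma det33 (T : comNzRingType) (A : 'M[T]_3) :
  \det A = A 0 0 * (A 1 1 * A 2 2 - A 1 2 * A 2 1)
         - A 0 1 * (A 1 0 * A 2 2 - A 1 2 * A 2 0)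
         + A 0 2 * (A 1 0 * A 2 1 - A 1 1 * A 2 0).
Proof.
rewrite (expand_det_row _ ord0) !big_ord_recl big_ord0 /= /cofactor.
rewrite !(expand_det_row _ ord0) !big_ord_recl !big_ord0 /= /cofactor.
rewrite !det_mx11 !mxE /=.
pose B (a b : nat) := A (inord a) (inord b).
have E : forall i j : 'I_3, A i j = B i j by move=> i j; rewrite /B !inord_val.
rewrite !E /=.
rewrite !expr0 !expr1 /= !expr2.
ring.
Qed.

Lemma normK_kval a b c : normK lam (kval a b c) =
  ratr (a * (a * (a + m%:R * (b + c * m%:R)) - c * (b + c * m%:R))
        - c * (b * (a + m%:R * (b + c * m%:R)) - c * c)
        + (b + c * m%:R) * (b * (b + c * m%:R) - a * c)).
Proof. by rewrite /normK (mulmat_eq (Mof_spec a b c)) det33 !mxE /=. Qed.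

Lemma kval1 : kval 1 0 0 = 1.
Proof. by rewrite /kval rmorph1 rmorph0 !mul0r !addr0. Qed.

Lemma kvallam : kval 0 1 0 = lam.
Proof. by rewrite /kval rmorph1 rmorph0 !mul0r mul1r add0r addr0. Qed.

Definition Ak (k : nat) : R := lam ^+ 2 - k%:R * lam.

Lemma kvalA k : kval 0 (- k%:R) 1 = Ak k.
Proof.
rewrite /kval /Ak rmorph0 rmorph1 add0r mul1r.
have -> : ratr (- k%:R) = - k%:R :> R by rewrite rmorphN rmorph_nat.
ring.
Qed.

Lemma normK1 : normK lam 1 = 1.
Proof.
have := normK_kval 1 0 0; rewrite kval1 => ->.
rewrite (_ : _ * _ - _ + _ = 1) ?rmorph1 //; ring.
Qed.

Lemma normKlam : normK lam lam = 1.
Proof.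
have := normK_kval 0 1 0; rewrite kvallam => ->.
rewrite (_ : _ * _ - _ + _ = 1) ?rmorph1 //; ring.
Qed.

Lemma normKA k : normK lam (Ak k) = 1 + k%:R ^+ 2 * (m%:R - k%:R).
Proof.
have := normK_kval 0 (- k%:R) 1; rewrite kvalA => ->.
rewrite (_ : _ * _ - _ + _ = 1 + k%:R ^+ 2 * (m%:R - k%:R)); last by ring.
by rewrite rmorphD rmorph1 rmorphM rmorphB ?rmorphXn !rmorph_nat.
Qed.

Lemma inK1 : inK lam 1.
Proof. by rewrite -kval1; exists 1, 0, 0. Qed.

Lemma inKA k : inK lam (Ak k).
Proof. by rewrite -kvalA; exists 0, (- k%:R), 1. Qed.

Lemma A_gt k : (k < m)%N -> lam < Ak k.
Proof.
move=> hk; have hl := lam_gt_m; have h1 := lam_gt1.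
have : k%:R + 1 <= m%:R :> R by rewrite natr1 ler_nat.
rewrite /Ak => hkm.
nra.
Qed.



Lemma rr_ge2 : 2 <= rr R.
Proof. rewrite /rr; lra. Qed.

Definition wv (x : R) := powR x (rr R) / `|normK lam x|.

Lemma wv1 : wv 1 = 1.
Proof. by rewrite /wv powR1 normK1 normr1 divr1. Qed.

Lemma wvlam : 1 < wv lam.
Proof.
rewrite /wv normKlam normr1 divr1.
apply: (lt_le_trans lam_gt1); apply: le1r_powR; first exact: ltW lam_gt1.
by apply: le_trans rr_ge2; rewrite ler1n.
Qed.

Lemma wvA k : (k < m)%N -> 1 < wv (Ak k).
Proof.
move=> hk; rewrite /wv normKA.
have hl := lam_gt_m; have h1 := lam_gt1.
have hkm : k%:R + 1 <= m%:R :> R by rewrite natr1 ler_nat.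
have k0 : 0 <= k%:R :> R by rewrite ler0n.
have hN : 0 < 1 + k%:R ^+ 2 * (m%:R - k%:R) :> R.
  have : 0 <= k%:R ^+ 2 * (m%:R - k%:R) :> R by apply: mulr_ge0; [exact: sqr_ge0 | lra].
  lra.
rewrite gtr0_norm // ltr_pdivlMr // mul1r.
have hA : m%:R * (m%:R - k%:R) < Ak k :> R.
  rewrite /Ak; nra.
have hA1 : 1 <= m%:R * (m%:R - k%:R) :> R by nra.
have hAA : 1 <= Ak k by lra.
apply: (@lt_le_trans _ _ (Ak k ^+ 2)).
  have : (m%:R * (m%:R - k%:R)) ^+ 2 < Ak k ^+ 2 by rewrite ltr_pXn2r // ?nnegrE; lra.
  set j := m%:R - k%:R.
  have hj : 1 <= j by rewrite /j; lra.
  have hmj : m%:R = k%:R + j by rewrite /j; ring.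
  rewrite hmj.
  have s0 : ((k%:R + j) * j) ^+ 2 = (k%:R + j) ^+ 2 * j ^+ 2 :> R by ring.
  have s1 : (k%:R + j) ^+ 2 * j <= (k%:R + j) ^+ 2 * j ^+ 2 :> R.
    apply: ler_wpM2l; first exact: sqr_ge0.
    rewrite expr2; nra.
  have s2 : 1 + k%:R ^+ 2 * j <= (k%:R + j) ^+ 2 * j :> R.
    have e : (k%:R + j) ^+ 2 * j - k%:R ^+ 2 * j = (2 * k%:R * j) * j + j * j * j :> R by ring.
    have t1 : 0 <= (2 * k%:R * j) * j :> R.
      apply: mulr_ge0; last lra. apply: mulr_ge0; lra.
    have t2 : 1 <= j * j * j :> R.
      have : 1 <= j * j by nra.
      nra.
    lra.
  rewrite s0; lra.
rewrite -powR_mulrn; last lra.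
apply: ler_powR => //; exact: rr_ge2.
Qed.

Definition pt (a b c : R) : R * R := (b / (a + b + c), c / (a + b + c)).
Definition rawc (i : nat) (a b c : R) := match i with 0%N => a | 1%N => b | _ => c end.

Lemma powR_div (y S : R) r : 0 < y -> 0 < S -> powR (y / S) r = powR y r / powR S r.
Proof.
move=> hy hS.
have hS' : powR S r != 0 by rewrite gt_eqF // powR_gt0.
have -> : powR y r = powR (y / S) r * powR S r.
  rewrite -powRM; first by rewrite divfK // gt_eqF.
    exact: divr_ge0 (ltW hy) (ltW hS).
  exact: ltW.
by rewrite mulfK.
Qed.

Lemma normK_div y S : inK lam y -> inK lam S -> S != 0 ->
  normK lam (y / S) = normK lam y / normK lam S.
Proof.
move=> hy hS Snz.
have hN := normK_neq0 hS Snz.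
have hyS : inK lam (y / S) by apply: inK_mul => //; exact: inK_inv.
have -> : normK lam y = normK lam (y / S) * normK lam S.
  by rewrite -normK_mul // divfK.
by rewrite mulfK.
Qed.

Lemma coord_pt a b c i : 0 < a + b + c -> (i < 3)%N ->
  coordK i (pt a b c) = rawc i a b c / (a + b + c).
Proof.
move=> hS; case: i => [|[|[|i]]] // _; rewrite /coordK /pt /= //.
by field; rewrite gt_eqF.
Qed.

Lemma rawc_pos a b c i : 0 < a -> 0 < b -> 0 < c -> 0 < rawc i a b c.
Proof. by case: i => [|[|i]]. Qed.

Lemma rawc_inK a b c i : inK lam a -> inK lam b -> inK lam c -> inK lam (rawc i a b c).
Proof. by case: i => [|[|i]]. Qed.

Lemma rawc_N a b c i : 0 < a -> 0 < b -> 0 < c -> inK lam a -> inK lam b -> inK lam c ->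
  normK lam (rawc i a b c) != 0.
Proof.
move=> ha hb hc ka kb kc; apply: normK_neq0; first exact: rawc_inK.
by rewrite gt_eqF // rawc_pos.
Qed.

Lemma alg_id (py pz pS Ny Nz NS : R) : pS != 0 -> NS != 0 -> Ny != 0 -> Nz != 0 ->
  py / pS * (pz / pS) / `|Ny / NS * (Nz / NS)| =
  py / `|Ny| * (pz / `|Nz|) * (`|NS| ^+ 2 / pS ^+ 2).
Proof.
move=> h1 h2 h3 h4; rewrite normrM !normf_div.
have : `|NS| != 0 by rewrite normr_eq0.
have : `|Ny| != 0 by rewrite normr_eq0.
have : `|Nz| != 0 by rewrite normr_eq0.
move: `|NS| `|Ny| `|Nz| => a b c ha hb hc.
field; by rewrite h1 ha hb hc.
Qed.

Lemma vK_pt a b c i j : 0 < a -> 0 < b -> 0 < c ->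
  inK lam a -> inK lam b -> inK lam c -> (i < 3)%N -> (j < 3)%N ->
  vK lam i j (pt a b c) = wv (rawc i a b c) * wv (rawc j a b c) *
     (`|normK lam (a + b + c)| ^+ 2 / (powR (a + b + c) (rr R)) ^+ 2).
Proof.
move=> ha hb hc ka kb kc hi hj.
have hS : 0 < a + b + c by rewrite !addr_gt0.
have kS : inK lam (a + b + c) by apply: inK_add => //; apply: inK_add.
have Snz : a + b + c != 0 by rewrite gt_eqF.
have NS := normK_neq0 kS Snz.
have pS : powR (a + b + c) (rr R) != 0 by rewrite gt_eqF // powR_gt0.
have Ni := rawc_N i ha hb hc ka kb kc.
have Nj := rawc_N j ha hb hc ka kb kc.
rewrite /vK !coord_pt // !powR_div ?rawc_pos //.
rewrite !normK_div ?rawc_inK //.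
rewrite /wv; apply: alg_id => //.
all: by apply: rawc_inK.
Qed.

Lemma vK_sym p i j : vK lam i j p = vK lam j i p.
Proof. by rewrite /vK [X in X / _]mulrC [X in _ / `|X|]mulrC. Qed.

Lemma Ind_cases kl : inInd kl ->
  kl = (0,1)%N \/ kl = (0,2)%N \/ kl = (1,0)%N \/ kl = (1,2)%N \/ kl = (2,0)%N \/ kl = (2,1)%N.
Proof.
case: kl => a b [/= ha hb hab].
case: a ha hab => [|[|[|a]]] // _; case: b hb => [|[|[|b]]] // _ hab;
  try (by exfalso; apply: hab); tauto.
Qed.

Lemma eps_pair p ij ij' : is_eps lam p ij -> is_eps lam p ij' ->
  (ij'.1 = ij.1 /\ ij'.2 = ij.2) \/ (ij'.1 = ij.2 /\ ij'.2 = ij.1).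
Proof.
case=> hI h ht [hI' h' ht'].
have [H1|H1] := pselect (ij'.1 = ij.1 /\ ij'.2 = ij.2); first by left.
have [H2|H2] := pselect (ij'.1 = ij.2 /\ ij'.2 = ij.1); first by right.
exfalso.
have l1 := h ij' hI' H1 H2.
have l2 : vK lam ij.1 ij.2 p < vK lam ij'.1 ij'.2 p.
  apply: h' => //; first by case=> e1 e2; apply: H1.
  by case=> e1 e2; apply: H2.
by move: (lt_trans l1 l2); rewrite ltxx.
Qed.

Lemma TK_some p ij : inDeltaK lam p -> is_eps lam p ij ->
  (forall ij', is_eps lam p ij' -> ij' = ij) -> TK lam p = Some (Tij ij p).
Proof.
move=> hD he hu; rewrite /TK asboolT; last by split => //; exists ij; split => // ij' /hu ->.
by rewrite (xget_unique _ he).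
Qed.

Lemma inDeltaK_pt a b c : 0 < a -> 0 < b -> 0 < c ->
  inK lam a -> inK lam b -> inK lam c ->
  (forall u v w : rat, ratr u * a + ratr (u + v) * b + ratr (u + w) * c = 0 ->
      [/\ u = 0, v = 0 & w = 0]) ->
  inDeltaK lam (pt a b c).
Proof.
move=> ha hb hc ka kb kc H.
have hS : 0 < a + b + c by rewrite !addr_gt0.
have kS : inK lam (a + b + c) by apply: inK_add => //; apply: inK_add.
have Snz : a + b + c != 0 by rewrite gt_eqF.
have kS' := inK_inv kS Snz.
split => /=.
- exact: inK_mul.
- exact: inK_mul.
- move=> u v w e; apply: H.
  have -> : ratr (u + v) = ratr u + ratr v :> R by rewrite rmorphD.
  have -> : ratr (u + w) = ratr u + ratr w :> R by rewrite rmorphD.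
  transitivity ((ratr u + ratr v * (b / (a + b + c)) + ratr w * (c / (a + b + c))) * (a + b + c)).
    by field.
  by rewrite e mul0r.
- split.
  + exact: divr_gt0.
  + exact: divr_gt0.
  + rewrite -mulrDl ltr_pdivrMr // mul1r; lra.
Qed.

Lemma inDelta_pt a b c : 0 < a -> 0 < b -> 0 < c -> inDelta (pt a b c).
Proof.
move=> ha hb hc; have hS : 0 < a + b + c by rewrite !addr_gt0.
split => /=.
- exact: divr_ge0 (ltW hb) (ltW hS).
- exact: divr_ge0 (ltW hc) (ltW hS).
- rewrite -mulrDl ler_pdivrMr // mul1r; lra.
Qed.



Lemma Cpos a b c : 0 < a -> 0 < b -> 0 < c -> inK lam a -> inK lam b -> inK lam c ->
  0 < `|normK lam (a + b + c)| ^+ 2 / (powR (a + b + c) (rr R)) ^+ 2.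
Proof.
move=> ha hb hc ka kb kc.
have hS : 0 < a + b + c by rewrite !addr_gt0.
have kS : inK lam (a + b + c) by apply: inK_add => //; apply: inK_add.
have NS := normK_neq0 kS (lt0r_neq0 hS).
apply: divr_gt0; first by rewrite exprn_gt0 // normr_gt0.
by rewrite exprn_gt0 // powR_gt0.
Qed.

Lemma sign_div (z S : R) : 0 < S -> (z / S <= 0) = (z <= 0).
Proof. by move=> hS; rewrite ler_pdivrMr // mul0r. Qed.

Lemma sign_div' (z S : R) : 0 < S -> (0 <= z / S) = (0 <= z).
Proof. by move=> hS; rewrite ler_pdivlMr // mul0r. Qed.

Lemma lam_inK : inK lam lam. Proof. exact: inK_lam. Qed.

Lemma kpos k : (k < m)%N -> 0 < Ak k.
Proof. move=> hk; apply: lt_trans (A_gt hk); exact: lam_gt0. Qed.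

Definition f1 k := pt (Ak k) 1 lam.

Lemma inD1 k : (k < m)%N -> inDeltaK lam (f1 k).
Proof.
move=> hk; apply: inDeltaK_pt; rewrite ?ltr01 ?lam_gt0 ?kpos //.
- exact: inKA.
- exact: inK1.
- exact: inK_lam.
move=> u v w e.
have e2 : ratr (u + v) + ratr (u + w - u * k%:R) * lam + ratr u * lam ^+ 2 = 0 :> R.
  have -> : ratr (u + w - u * k%:R) = ratr (u + w) - ratr u * k%:R :> R.
    by rewrite rmorphB rmorphM rmorph_nat.
  rewrite -e /Ak; ring.
have [h0 h1 h2] := Qind e2.
split => //.
- by move: h0; rewrite h2 add0r.
- by move: h1; rewrite h2 add0r mul0r subr0.
Qed.

Lemma step1 k : (k < m)%N -> TK lam (f1 k) = Some (f1 k.+1).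
Proof.
move=> hk.
have ha := kpos hk; have hb := @ltr01 R; have hc := lam_gt0.
have ka := inKA k; have kb := inK1; have kc := inK_lam.
have hS : 0 < Ak k + 1 + lam by apply: addr_gt0 => //; apply: addr_gt0.
have hAl := A_gt hk.
have V : forall i j, (i < 3)%N -> (j < 3)%N -> vK lam i j (f1 k) =
   wv (rawc i (Ak k) 1 lam) * wv (rawc j (Ak k) 1 lam) *
     (`|normK lam (Ak k + 1 + lam)| ^+ 2 / (powR (Ak k + 1 + lam) (rr R)) ^+ 2).
  by move=> i j hi hj; apply: vK_pt.
have C := Cpos ha hb hc ka kb kc.
have w1 := wv1; have wl := wvlam; have wA := wvA hk.
have trieq : (f1 k).1 + 2 * (f1 k).2 - 1 = (lam - Ak k) / (Ak k + 1 + lam).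
  by rewrite /f1 /pt /=; field; rewrite gt_eqF.
have he : is_eps lam (f1 k) (0,2)%N.
  split.
  - by split.
  - have l1 : vK lam 0 1 (f1 k) < vK lam 0 2 (f1 k).
      rewrite !V //= w1 ltr_pM2r //; nra.
    have l2 : vK lam 1 2 (f1 k) < vK lam 0 2 (f1 k).
      rewrite !V //= w1 ltr_pM2r //; nra.
    move=> kl hI.
    case: (Ind_cases hI) => [->|[->|[->|[->|[->|->]]]]] /= n1 n2.
    + exact: l1.
    + by exfalso; apply: n1.
    + by rewrite vK_sym.
    + exact: l2.
    + by exfalso; apply: n2.
    + by rewrite vK_sym.
  - split; first exact: inDelta_pt.
    rewrite /= trieq sign_div //; lra.
have hS' : 0 < lam ^+ 2 - k%:R * lam + 1 + lam by move: hS; rewrite /Ak.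
have hS2 : 0 < lam ^+ 2 - (k%:R + 1) * lam + 1 + lam by move: hAl; rewrite /Ak; lra.
rewrite (TK_some (inD1 hk) he).
  rewrite /f1 /Tij /pt /=; congr (Some (_, _)); rewrite /Ak -natr1; field.
  all: try by rewrite !lt0r_neq0.
move=> [x y] h'; case: (eps_pair he h') => /= [[-> ->] //|[ex ey]].
exfalso; move: h'; rewrite ex ey => -[_ _ [_ /=]]; rewrite trieq sign_div' //; lra.
Qed.



Definition f2 k := pt 1 lam (Ak k).

Lemma inD2 k : (k < m)%N -> inDeltaK lam (f2 k).
Proof.
move=> hk; apply: inDeltaK_pt; rewrite ?ltr01 ?lam_gt0 ?kpos //.
- exact: inK1.
- exact: inK_lam.
- exact: inKA.
move=> u v w e.
have e2 : ratr u + ratr ((u + v) - (u + w) * k%:R) * lam + ratr (u + w) * lam ^+ 2 = 0 :> R.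
  have -> : ratr ((u + v) - (u + w) * k%:R) = ratr (u + v) - ratr (u + w) * k%:R :> R.
    by rewrite rmorphB rmorphM rmorph_nat.
  rewrite -e /Ak; ring.
have [h0 h1 h2] := Qind e2.
have w0 : w = 0 by move: h2; rewrite h0 add0r.
split => //.
by move: h1; rewrite h0 w0 !add0r mul0r subr0.
Qed.

Lemma step2 k : (k < m)%N -> TK lam (f2 k) = Some (f2 k.+1).
Proof.
move=> hk.
have ha := @ltr01 R; have hb := lam_gt0; have hc := kpos hk.
have ka := inK1; have kb := inK_lam; have kc := inKA k.
have hS : 0 < 1 + lam + Ak k by apply: addr_gt0 => //; apply: addr_gt0.
have hAl := A_gt hk.
have V : forall i j, (i < 3)%N -> (j < 3)%N -> vK lam i j (f2 k) =
   wv (rawc i 1 lam (Ak k)) * wv (rawc j 1 lam (Ak k)) *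
     (`|normK lam (1 + lam + Ak k)| ^+ 2 / (powR (1 + lam + Ak k) (rr R)) ^+ 2).
  by move=> i j hi hj; apply: vK_pt.
have C := Cpos ha hb hc ka kb kc.
have w1 := wv1; have wl := wvlam; have wA := wvA hk.
have trieq : (f2 k).2 - (f2 k).1 = (Ak k - lam) / (1 + lam + Ak k).
  by rewrite /f2 /pt /=; field; rewrite gt_eqF.
have he : is_eps lam (f2 k) (2,1)%N.
  split.
  - by split.
  - have l1 : vK lam 0 1 (f2 k) < vK lam 2 1 (f2 k).
      rewrite !V //= w1 ltr_pM2r //; nra.
    have l2 : vK lam 0 2 (f2 k) < vK lam 2 1 (f2 k).
      rewrite !V //= w1 ltr_pM2r //; nra.
    move=> kl hI.
    case: (Ind_cases hI) => [->|[->|[->|[->|[->|->]]]]] /= n1 n2.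
    + exact: l1.
    + exact: l2.
    + by rewrite vK_sym.
    + by exfalso; apply: n2.
    + by rewrite vK_sym.
    + by exfalso; apply: n1.
  - split; first exact: inDelta_pt.
    rewrite /= -subr_ge0 trieq sign_div' //; lra.
have hS' : 0 < 1 + lam + (lam ^+ 2 - k%:R * lam) by move: hS; rewrite /Ak.
have hS2 : 0 < 1 + lam + (lam ^+ 2 - (k%:R + 1) * lam) by move: hAl; rewrite /Ak; lra.
rewrite (TK_some (inD2 hk) he).
  rewrite /f2 /Tij /pt /=; congr (Some (_, _)); rewrite /Ak -natr1; field.
  all: try by rewrite !lt0r_neq0.
move=> [x y] h'; case: (eps_pair he h') => /= [[-> ->] //|[ex ey]].
exfalso; move: h'; rewrite ex ey => -[_ _ [_ /=]].
rewrite -subr_ge0 -opprB oppr_ge0 trieq sign_div //; lra.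
Qed.

Definition f3 k := pt lam (Ak k) 1.

Lemma inD3 k : (k < m)%N -> inDeltaK lam (f3 k).
Proof.
move=> hk; apply: inDeltaK_pt; rewrite ?ltr01 ?lam_gt0 ?kpos //.
- exact: inK_lam.
- exact: inKA.
- exact: inK1.
move=> u v w e.
have e2 : ratr (u + w) + ratr (u - (u + v) * k%:R) * lam + ratr (u + v) * lam ^+ 2 = 0 :> R.
  have -> : ratr (u - (u + v) * k%:R) = ratr u - ratr (u + v) * k%:R :> R.
    by rewrite rmorphB rmorphM rmorph_nat.
  rewrite -e /Ak; ring.
have [h0 h1 h2] := Qind e2.
have u0 : u = 0 by move: h1; rewrite h2 mul0r subr0.
split => //.
- by move: h2; rewrite u0 add0r.
- by move: h0; rewrite u0 add0r.
Qed.

Lemma step3 k : (k < m)%N -> TK lam (f3 k) = Some (f3 k.+1).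
Proof.
move=> hk.
have ha := lam_gt0; have hb := kpos hk; have hc := @ltr01 R.
have ka := inK_lam; have kb := inKA k; have kc := inK1.
have hS : 0 < lam + Ak k + 1 by apply: addr_gt0 => //; apply: addr_gt0.
have hAl := A_gt hk.
have V : forall i j, (i < 3)%N -> (j < 3)%N -> vK lam i j (f3 k) =
   wv (rawc i lam (Ak k) 1) * wv (rawc j lam (Ak k) 1) *
     (`|normK lam (lam + Ak k + 1)| ^+ 2 / (powR (lam + Ak k + 1) (rr R)) ^+ 2).
  by move=> i j hi hj; apply: vK_pt.
have C := Cpos ha hb hc ka kb kc.
have w1 := wv1; have wl := wvlam; have wA := wvA hk.
have trieq : 2 * (f3 k).1 + (f3 k).2 - 1 = (Ak k - lam) / (lam + Ak k + 1).
  by rewrite /f3 /pt /=; field; rewrite gt_eqF.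
have he : is_eps lam (f3 k) (1,0)%N.
  split.
  - by split.
  - have l1 : vK lam 0 2 (f3 k) < vK lam 1 0 (f3 k).
      rewrite !V //= w1 ltr_pM2r //; nra.
    have l2 : vK lam 1 2 (f3 k) < vK lam 1 0 (f3 k).
      rewrite !V //= w1 ltr_pM2r //; nra.
    move=> kl hI.
    case: (Ind_cases hI) => [->|[->|[->|[->|[->|->]]]]] /= n1 n2.
    + by exfalso; apply: n2.
    + exact: l1.
    + by exfalso; apply: n1.
    + exact: l2.
    + by rewrite vK_sym.
    + by rewrite vK_sym.
  - split; first exact: inDelta_pt.
    rewrite /= trieq sign_div' //; lra.
have hS' : 0 < lam + (lam ^+ 2 - k%:R * lam) + 1 by move: hS; rewrite /Ak.
have hS2 : 0 < lam + (lam ^+ 2 - (1 + k%:R) * lam) + 1 by move: hAl; rewrite /Ak; lra.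
have hS3 : 0 < lam + (lam ^+ 2 - (k%:R + 1) * lam) + 1 by move: hAl; rewrite /Ak; lra.
rewrite (TK_some (inD3 hk) he).
  rewrite /f3 /Tij /pt /=; congr (Some (_, _)); rewrite /Ak -natr1; field.
  all: try by rewrite !lt0r_neq0.
move=> [x y] h'; case: (eps_pair he h') => /= [[-> ->] //|[ex ey]].
exfalso; move: h'; rewrite ex ey => -[_ _ [_ /=]].
rewrite trieq sign_div //; lra.
Qed.



Lemma iter_gen (f : nat -> R * R) N :
  (forall k, (k < N)%N -> TK lam (f k) = Some (f k.+1)) ->
  forall k, (k <= N)%N -> TKiter lam k (f 0%N) = Some (f k).
Proof.
move=> h; elim=> [|k IH] hk //=.
by rewrite IH ?(ltnW hk) //= h.
Qed.

Lemma TKiter_add p a b : TKiter lam (a + b)%N p = obind (TKiter lam b) (TKiter lam a p).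
Proof.
elim: b => [|b IH]; first by rewrite addn0; case: (TKiter lam a p).
by rewrite addnS /= IH; case: (TKiter lam a p).
Qed.

Lemma pt_scale a b c t : t != 0 -> a + b + c != 0 -> pt (t * a) (t * b) (t * c) = pt a b c.
Proof.
move=> ht hS; rewrite /pt; congr (_, _); field.
all: by rewrite hS -!mulrDr mulf_neq0.
Qed.

Lemma LA : lam * Ak m = 1.
Proof. by rewrite /Ak; apply/eqP; rewrite -subr_eq0 -hlam; apply/eqP; ring. Qed.

Lemma Am_pos : 0 < Ak m.
Proof. have := LA; have := lam_gt0; nra. Qed.

Lemma E1 : f1 m = f2 0%N.
Proof.
have l0 := lam_gt0; have a0 := Am_pos.
rewrite /f1 /f2 -(@pt_scale _ _ _ lam); first by rewrite LA mulr1 /Ak mul0r subr0 expr2.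
- by rewrite lt0r_neq0.
- by rewrite lt0r_neq0 //; lra.
Qed.

Lemma E2 : f2 m = f3 0%N.
Proof.
have l0 := lam_gt0; have a0 := Am_pos.
rewrite /f2 /f3 -(@pt_scale _ _ _ lam); first by rewrite LA mulr1 /Ak mul0r subr0 expr2.
- by rewrite lt0r_neq0.
- by rewrite lt0r_neq0 //; lra.
Qed.

Lemma E3 : f3 m = f1 0%N.
Proof.
have l0 := lam_gt0; have a0 := Am_pos.
rewrite /f3 /f1 -(@pt_scale _ _ _ lam); first by rewrite LA mulr1 /Ak mul0r subr0 expr2.
- by rewrite lt0r_neq0.
- by rewrite lt0r_neq0 //; lra.
Qed.

Lemma cycle3 : TKiter lam (m + m + m)%N (f1 0%N) = Some (f1 0%N).
Proof.
have T1 := iter_gen step1 (leqnn m).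
have T2 := iter_gen step2 (leqnn m).
have T3 := iter_gen step3 (leqnn m).
by rewrite !TKiter_add T1 /= E1 T2 /= E2 T3 /= E3.
Qed.

Lemma main_sec :
  let P := (1 / (1 + lam + lam ^+ 2), lam / (1 + lam + lam ^+ 2)) in
  inDeltaK lam P /\
  exists m1 n1 : nat, [/\ (0 < m1)%N, (0 < n1)%N, m1 <> n1,
    TKiter lam m1 P <> None & TKiter lam m1 P = TKiter lam n1 P].
Proof.
move=> P.
have E0 : P = f1 0%N by rewrite /P /f1 /pt /Ak; congr (_ / _, _ / _); ring.
rewrite E0; split; first exact: inD1 hm.
exists (m + m + m)%N, ((m + m + m) + (m + m + m))%N; split.
- by rewrite !addn_gt0 hm.
- by rewrite !addn_gt0 hm.
- lia.
- by rewrite cycle3.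
- by rewrite [in RHS]TKiter_add cycle3 /= cycle3.
Qed.

End Main.

Theorem theorem2p9 (R : realType) (m : nat) (lam : R) :
  (0 < m)%N ->
  lam ^+ 3 - m%:R * lam ^+ 2 - 1 = 0 ->
  let P := (1 / (1 + lam + lam ^+ 2), lam / (1 + lam + lam ^+ 2)) in
  inDeltaK lam P /\
  exists m1 n1 : nat, [/\ (0 < m1)%N, (0 < n1)%N, m1 <> n1,
    TKiter lam m1 P <> None & TKiter lam m1 P = TKiter lam n1 P].
Proof. move=> hm hlam; exact: main_sec hm hlam. Qed.
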